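(* For all metric formulas $\varphi,\psi,\chi$ the following equivalences hold in MHT: $\bigcirc_I(\varphi\vee\psi)\equiv\bigcirc_I\varphi\vee\bigcirc_I\psi$; $\bigcirc_I(\varphi\wedge\psi)\equiv\bigcirc_I\varphi\wedge\bigcirc_I\psi$; $\widehat{\bigcirc}_I(\varphi\vee\psi)\equiv\widehat{\bigcirc}_I\varphi\vee\widehat{\bigcirc}_I\psi$; $\widehat{\bigcirc}_I(\varphi\wedge\psi)\equiv\widehat{\bigcirc}_I\varphi\wedge\widehat{\bigcirc}_I\psi$; $\Diamond_I(\varphi\vee\psi)\equiv\Diamond_I\varphi\vee\Diamond_I\psi$; $\Box_I(\varphi\wedge\psi)\equiv\Box_I\varphi\wedge\Box_I\psi$; $\widehat{\bullet}_I(\varphi\vee\psi)\equiv\widehat{\bullet}_I\varphi\vee\widehat{\bullet}_I\psi$; $\widehat{\bullet}_I(\varphi\wedge\psi)\equiv\widehat{\bullet}_I\varphi\wedge\widehat{\bullet}_I\psi$; $\top\,\mathsf{S}_I\,(\varphi\vee\psi)\equiv(\top\,\mathsf{S}_I\,\varphi)\vee(\top\,\mathsf{S}_I\,\psi)$; $(\varphi\vee\chi)\,\mathsf{T}_I\,\psi\equiv(\varphi\,\mathsf{T}_I\,\psi)\vee(\chi\,\mathsf{T}_I\,\psi)$; $\varphi\,\mathsf{U}_I\,(\chi\vee\psi)\equiv(\varphi\,\mathsf{U}_I\,\chi)\vee(\varphi\,\mathsf{U}_I\,\psi)$; $(\varphi\wedge\chi)\,\mathsf{U}_I\,\psi\equiv(\varphi\,\mathsf{U}_I\,\psi)\wedge(\chi\,\mathsf{U}_I\,\psi)$;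 $\varphi\,\mathsf{R}_I\,(\chi\wedge\psi)\equiv(\varphi\,\mathsf{R}_I\,\chi)\wedge(\varphi\,\mathsf{R}_I\,\psi)$; $(\varphi\vee\chi)\,\mathsf{R}_I\,\psi\equiv(\varphi\,\mathsf{R}_I\,\psi)\vee(\chi\,\mathsf{R}_I\,\psi)$; $(\varphi\wedge\chi)\,\mathsf{S}_I\,\psi\equiv(\varphi\,\mathsf{S}_I\,\psi)\wedge(\chi\,\mathsf{S}_I\,\psi)$; $\varphi\,\mathsf{S}_I\,(\chi\vee\psi)\equiv(\varphi\,\mathsf{S}_I\,\chi)\vee(\varphi\,\mathsf{S}_I\,\psi)$; $\bullet_I(\varphi\vee\psi)\equiv\bullet_I\varphi\vee\bullet_I\psi$; $\bullet_I(\varphi\wedge\psi)\equiv\bullet_I\varphi\wedge\bullet_I\psi$; $\blacksquare_I(\varphi\wedge\psi)\equiv\blacksquare_I\varphi\wedge\blacksquare_I\psi$; $\varphi\,\mathsf{T}_I\,(\chi\wedge\psi)\equiv(\varphi\,\mathsf{T}_I\,\chi)\wedge(\varphi\,\mathsf{T}_I\,\psi)$.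
   Context: Metric formulas over $\mathcal{A}$: $\varphi ::= p \mid \bot \mid \varphi_1\otimes\varphi_2 \mid \bullet_I\varphi \mid \varphi_1\,\mathsf{S}_I\,\varphi_2 \mid \varphi_1\,\mathsf{T}_I\,\varphi_2 \mid \bigcirc_I\varphi \mid \varphi_1\,\mathsf{U}_I\,\varphi_2 \mid \varphi_1\,\mathsf{R}_I\,\varphi_2$, $\otimes\in\{\to,\wedge,\vee\}$, $I=[m,n)$, $m\in\mathbb{N}$, $n\in\mathbb{N}\cup\{\omega\}$. Derived: $\neg\varphi=\varphi\to\bot$, $\top=\neg\bot$, $\blacksquare_I\varphi=\bot\,\mathsf{T}_I\,\varphi$ (always before), $\top\,\mathsf{S}_I\,\varphi$ (eventually before), $\widehat{\bullet}_I\varphi=\bullet_I\varphi\vee\neg\bullet_I\top$, $\Box_I\varphi=\bot\,\mathsf{R}_I\,\varphi$, $\Diamond_I\varphi=\top\,\mathsf{U}_I\,\varphi$, $\widehat{\bigcirc}_I\varphi=\bigcirc_I\varphi\vee\neg\bigcirc_I\top$. Timed HT-trace $\mathbf{M}=(\langle\mathbf{H},\mathbf{T}\rangle,\tau)$ of length $\lambda$: $H_i\subseteq T_i\subseteq\mathcal{A}$, $\tau:[0,\lambda)\to\mathbb{N}$, $\tau(0)=0$, $\tau(i)\le\tau(i+1)$. Satisfaction at $k$: $\bot$ never; $p$ iff $p\in H_k$; $\wedge,\vee$ usual; $\varphi\to\psi$ iff for both $\mathbf{M}'=\mathbf{M}$ and $\mathbf{M}'=(\langle\mathbf{T},\mathbf{T}\rangle,\tau)$,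 $\mathbf{M}',k\not\models\varphi$ or $\mathbf{M}',k\models\psi$; $\bullet_I\varphi$: $k>0$, $\varphi$ at $k-1$, $\tau(k)-\tau(k-1)\in I$; $\varphi\,\mathsf{S}_I\,\psi$: some $j\in[0,k]$ with $\tau(k)-\tau(j)\in I$, $\psi$ at $j$, $\varphi$ at all $i\in(j,k]$; $\varphi\,\mathsf{T}_I\,\psi$: for all such $j$, $\psi$ at $j$ or $\varphi$ at some $i\in(j,k]$; $\bigcirc_I\varphi$: $k+1<\lambda$, $\varphi$ at $k+1$, $\tau(k+1)-\tau(k)\in I$; $\varphi\,\mathsf{U}_I\,\psi$: some $j\in[k,\lambda)$ with $\tau(j)-\tau(k)\in I$, $\psi$ at $j$, $\varphi$ at all $i\in[k,j)$; $\varphi\,\mathsf{R}_I\,\psi$: for all such $j$, $\psi$ at $j$ or $\varphi$ at some $i\in[k,j)$. $\varphi\equiv\psi$ in MHT iff $\mathbf{M},k\models\varphi\leftrightarrow\psi$ for all timed HT-traces $\mathbf{M}$ and all $k$. *)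

(* Defs.v *)
From Stdlib Require Import Arith.

Set Implicit Arguments.

(* Extended naturals: Fin n or omega (None). *)
Definition enat := option nat.

Definition lt_enat (k : nat) (lam : enat) : Prop :=
  match lam with Some n => k < n | None => True end.

(* Intervals I = [m, n) with m in nat and n in nat U {omega} *)
Record interval := Itv { ilo : nat; ihi : enat }.

Definition in_itv (d : nat) (I : interval) : Prop :=
  ilo I <= d /\ lt_enat d (ihi I).

Inductive formula (A : Type) : Type :=
| Atom : A -> formula A
| Bot : formula A
| Imp : formula A -> formula A -> formula A
| And : formula A -> formula A -> formula A
| Or  : formula A -> formula A -> formula A
| Prev : interval -> formula A -> formula A
| Since : interval -> formula A -> formula A -> formula A
| Trigger : interval -> formula A -> formula A -> formula A
| Next : interval -> formula A -> formula A
| Until : interval -> formula A -> formula A -> formula A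
| Release : interval -> formula A -> formula A -> formula A.

Arguments Bot {A}.

Definition Neg {A} (f : formula A) : formula A := Imp f Bot.
Definition Top {A} : formula A := Neg Bot.
Definition Iff {A} (f g : formula A) : formula A := And (Imp f g) (Imp g f).
Definition AlwaysBefore {A} (I : interval) (f : formula A) : formula A :=
  Trigger I Bot f.
Definition EventuallyBefore {A} (I : interval) (f : formula A) : formula A :=
  Since I Top f.
Definition WPrev {A} (I : interval) (f : formula A) : formula A :=
  Or (Prev I f) (Neg (Prev I Top)).
Definition Always {A} (I : interval) (f : formula A) : formula A :=
  Release I Bot f.
Definition Eventually {A} (I : interval) (f : formula A) : formula A :=
  Until I Top f.
Definition WNext {A} (I : interval) (f : formula A) : formula A :=
  Or (Next I f) (Neg (Next I Top)).

(* Timed HT-trace of length lam (lam in nat U {omega}). Positions are the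
   k with lt_enat k lam; values at other positions are irrelevant. *)
Record trace (A : Type) := Trace {
  tlen : enat;
  tH : nat -> A -> Prop;
  tT : nat -> A -> Prop;
  ttau : nat -> nat;
  tHT : forall i a, lt_enat i tlen -> tH i a -> tT i a;
  ttau0 : ttau 0 = 0;
  ttau_mono : forall i, lt_enat (S i) tlen -> ttau i <= ttau (S i)
}.

(* Satisfaction: [H] is the "here" component currently in use; the "there"
   component T, timing tau and length lam are fixed. *)
Fixpoint sat {A} (lam : enat) (tau : nat -> nat) (T : nat -> A -> Prop)
  (H : nat -> A -> Prop) (k : nat) (f : formula A) {struct f} : Prop :=
  match f with
  | Atom p => H k p
  | Bot => False
  | And f g => sat lam tau T H k f /\ sat lam tau T H k g
  | Or f g => sat lam tau T H k f \/ sat lam tau T H k g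
  | Imp f g => (sat lam tau T H k f -> sat lam tau T H k g) /\
               (sat lam tau T T k f -> sat lam tau T T k g)
  | Prev J f => 0 < k /\ sat lam tau T H (k - 1) f /\
                in_itv (tau k - tau (k - 1)) J
  | Since J f g => exists j, j <= k /\ in_itv (tau k - tau j) J /\
                   sat lam tau T H j g /\
                   (forall i, j < i -> i <= k -> sat lam tau T H i f)
  | Trigger J f g => forall j, j <= k -> in_itv (tau k - tau j) J ->
                   sat lam tau T H j g \/
                   (exists i, j < i /\ i <= k /\ sat lam tau T H i f)
  | Next J f => lt_enat (S k) lam /\ sat lam tau T H (S k) f /\
                in_itv (tau (S k) - tau k) J
  | Until J f g => exists j, k <= j /\ lt_enat j lam /\
                   in_itv (tau j - tau k) J /\ sat lam tau T H j g /\
                   (forall i, k <= i -> i < j -> sat lam tau T H i f)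
  | Release J f g => forall j, k <= j -> lt_enat j lam ->
                   in_itv (tau j - tau k) J ->
                   sat lam tau T H j g \/
                   (exists i, k <= i /\ i < j /\ sat lam tau T H i f)
  end.

Definition models {A} (M : trace A) (k : nat) (f : formula A) : Prop :=
  sat (tlen M) (ttau M) (tT M) (tH M) k f.

Definition mht_equiv {A} (f g : formula A) : Prop :=
  forall (M : trace A) (k : nat), lt_enat k (tlen M) -> models M k (Iff f g).

(* Main.v *)
Require Import Defs.
From Stdlib Require Import Arith Lia Classical.

Lemma to_equiv {A} (f g : formula A) :
  (forall lam tau T H k, sat lam tau T H k f <-> sat lam tau T H k g) ->
  mht_equiv f g.
Proof.
  intros E M k _. unfold models; simpl.
  rewrite !E. tauto.
Qed.

Lemma negimp2 {a b p q : Prop} : ~(a -> b -> p \/ q) -> a /\ b /\ ~p /\ ~q.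
Proof. tauto. Qed.
Lemma negimp3 {a b c p q : Prop} : ~(a -> b -> c -> p \/ q) -> a /\ b /\ c /\ ~p /\ ~q.
Proof. tauto. Qed.

Ltac go := apply to_equiv; intros lam tau T H k; simpl.

Lemma L0 (A : Type) (I : interval) (phi psi chi : formula A) :
  mht_equiv (Next I (Or phi psi)) (Or (Next I phi) (Next I psi)).
Proof.
  go; firstorder.
Qed.

Lemma L1 (A : Type) (I : interval) (phi psi chi : formula A) :
  mht_equiv (Next I (And phi psi)) (And (Next I phi) (Next I psi)).
Proof.
  go; firstorder.
Qed.

Lemma L2 (A : Type) (I : interval) (phi psi chi : formula A) :
  mht_equiv (WNext I (Or phi psi)) (Or (WNext I phi) (WNext I psi)).
Proof.
  go; firstorder.
Qed.

Lemma L3 (A : Type) (I : interval) (phi psi chi : formula A) :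
  mht_equiv (WNext I (And phi psi)) (And (WNext I phi) (WNext I psi)).
Proof.
  go; firstorder.
Qed.

Lemma L4 (A : Type) (I : interval) (phi psi chi : formula A) :
  mht_equiv (Eventually I (Or phi psi)) (Or (Eventually I phi) (Eventually I psi)).
Proof.
  go; firstorder.
Qed.

Lemma L5 (A : Type) (I : interval) (phi psi chi : formula A) :
  mht_equiv (Always I (And phi psi)) (And (Always I phi) (Always I psi)).
Proof.
  go; firstorder.
Qed.

Lemma L6 (A : Type) (I : interval) (phi psi chi : formula A) :
  mht_equiv (WPrev I (Or phi psi)) (Or (WPrev I phi) (WPrev I psi)).
Proof.
  go; firstorder.
Qed.

Lemma L7 (A : Type) (I : interval) (phi psi chi : formula A) :
  mht_equiv (WPrev I (And phi psi)) (And (WPrev I phi) (WPrev I psi)).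
Proof.
  go; firstorder.
Qed.

Lemma L8 (A : Type) (I : interval) (phi psi chi : formula A) :
  mht_equiv (Since I Top (Or phi psi)) (Or (Since I Top phi) (Since I Top psi)).
Proof.
  go; firstorder.
Qed.

Lemma L9 (A : Type) (I : interval) (phi psi chi : formula A) :
  mht_equiv (Trigger I (Or phi chi) psi) (Or (Trigger I phi psi) (Trigger I chi psi)).
Proof.
    go; split.
    + intros L. apply NNPP; intros C.
      apply not_or_and in C as [C1 C2].
      apply not_all_ex_not in C1 as [j1 C1].
      apply not_all_ex_not in C2 as [j2 C2].
      assert (P1 : j1 <= k /\ in_itv (tau k - tau j1) I /\
         ~ sat lam tau T H j1 psi /\
         ~ (exists i, j1 < i /\ i <= k /\ sat lam tau T H i phi)) by exact (negimp2 C1).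
      assert (P2 : j2 <= k /\ in_itv (tau k - tau j2) I /\
         ~ sat lam tau T H j2 psi /\
         ~ (exists i, j2 < i /\ i <= k /\ sat lam tau T H i chi)) by exact (negimp2 C2).
      clear C1 C2.
      destruct (le_lt_dec j1 j2).
      * destruct (L j2) as [h|[i [h1 [h2 [h3|h3]]]]]; try tauto.
        -- apply (proj2 (proj2 (proj2 P1))). exists i; repeat split; auto; lia.
        -- apply (proj2 (proj2 (proj2 P2))). exists i; auto.
      * destruct (L j1) as [h|[i [h1 [h2 [h3|h3]]]]]; try tauto.
        -- apply (proj2 (proj2 (proj2 P1))). exists i; auto.
        -- apply (proj2 (proj2 (proj2 P2))). exists i; repeat split; auto; lia.
    + intros [L|L] j h1 h2; destruct (L j h1 h2) as [x|[i x]]; firstorder.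
Qed.

Lemma L10 (A : Type) (I : interval) (phi psi chi : formula A) :
  mht_equiv (Until I phi (Or chi psi)) (Or (Until I phi chi) (Until I phi psi)).
Proof.
  go; firstorder.
Qed.

Lemma L11 (A : Type) (I : interval) (phi psi chi : formula A) :
  mht_equiv (Until I (And phi chi) psi) (And (Until I phi psi) (Until I chi psi)).
Proof.
    go; split.
    + firstorder.
    + intros [[j1 [a1 [b1 [c1 [d1 e1]]]]] [j2 [a2 [b2 [c2 [d2 e2]]]]]].
      destruct (le_lt_dec j1 j2).
      * exists j1; do 4 (split; [auto|]); intros i x y; split; [apply e1|apply e2]; auto; lia.
      * exists j2; do 4 (split; [auto|]); intros i x y; split; [apply e1|apply e2]; auto; lia.
Qed.

Lemma L12 (A : Type) (I : interval) (phi psi chi : formula A) :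
  mht_equiv (Release I phi (And chi psi)) (And (Release I phi chi) (Release I phi psi)).
Proof.
  go; firstorder.
Qed.

Lemma L13 (A : Type) (I : interval) (phi psi chi : formula A) :
  mht_equiv (Release I (Or phi chi) psi) (Or (Release I phi psi) (Release I chi psi)).
Proof.
    go; split.
    + intros L. apply NNPP; intros C.
      apply not_or_and in C as [C1 C2].
      apply not_all_ex_not in C1 as [j1 C1].
      apply not_all_ex_not in C2 as [j2 C2].
      assert (P1 : k <= j1 /\ lt_enat j1 lam /\ in_itv (tau j1 - tau k) I /\
         ~ sat lam tau T H j1 psi /\
         ~ (exists i, k <= i /\ i < j1 /\ sat lam tau T H i phi)) by exact (negimp3 C1).
      assert (P2 : k <= j2 /\ lt_enat j2 lam /\ in_itv (tau j2 - tau k) I /\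
         ~ sat lam tau T H j2 psi /\
         ~ (exists i, k <= i /\ i < j2 /\ sat lam tau T H i chi)) by exact (negimp3 C2).
      clear C1 C2.
      destruct (le_lt_dec j1 j2).
      * destruct (L j1) as [h|[i [h1 [h2 [h3|h3]]]]]; try tauto.
        -- apply (proj2 (proj2 (proj2 (proj2 P1)))). exists i; auto.
        -- apply (proj2 (proj2 (proj2 (proj2 P2)))). exists i; repeat split; auto; lia.
      * destruct (L j2) as [h|[i [h1 [h2 [h3|h3]]]]]; try tauto.
        -- apply (proj2 (proj2 (proj2 (proj2 P1)))). exists i; repeat split; auto; lia.
        -- apply (proj2 (proj2 (proj2 (proj2 P2)))). exists i; auto.
    + intros [L|L] j h1 h2 h3; destruct (L j h1 h2 h3) as [x|[i x]]; firstorder.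
Qed.

Lemma L14 (A : Type) (I : interval) (phi psi chi : formula A) :
  mht_equiv (Since I (And phi chi) psi) (And (Since I phi psi) (Since I chi psi)).
Proof.
    go; split.
    + firstorder.
    + intros [[j1 [a1 [b1 [c1 e1]]]] [j2 [a2 [b2 [c2 e2]]]]].
      destruct (le_lt_dec j1 j2).
      * exists j2; do 3 (split; [auto|]); intros i x y; split; [apply e1|apply e2]; auto; lia.
      * exists j1; do 3 (split; [auto|]); intros i x y; split; [apply e1|apply e2]; auto; lia.
Qed.

Lemma L15 (A : Type) (I : interval) (phi psi chi : formula A) :
  mht_equiv (Since I phi (Or chi psi)) (Or (Since I phi chi) (Since I phi psi)).
Proof.
  go; firstorder.
Qed.

Lemma L16 (A : Type) (I : interval) (phi psi chi : formula A) :
  mht_equiv (Prev I (Or phi psi)) (Or (Prev I phi) (Prev I psi)).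
Proof.
  go; firstorder.
Qed.

Lemma L17 (A : Type) (I : interval) (phi psi chi : formula A) :
  mht_equiv (Prev I (And phi psi)) (And (Prev I phi) (Prev I psi)).
Proof.
  go; firstorder.
Qed.

Lemma L18 (A : Type) (I : interval) (phi psi chi : formula A) :
  mht_equiv (AlwaysBefore I (And phi psi)) (And (AlwaysBefore I phi) (AlwaysBefore I psi)).
Proof.
  go; firstorder.
Qed.

Lemma L19 (A : Type) (I : interval) (phi psi chi : formula A) :
  mht_equiv (Trigger I phi (And chi psi)) (And (Trigger I phi chi) (Trigger I phi psi)).
Proof.
  go; split.
    + intros L; split; intros j h1 h2; destruct (L j h1 h2) as [[x y]|x]; auto.
    + intros [L1 L2] j h1 h2; destruct (L1 j h1 h2) as [x|x]; auto;
        destruct (L2 j h1 h2) as [y|y]; auto.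
Qed.

Theorem proposition7 (A : Type) (I : interval) (phi psi chi : formula A) :
  mht_equiv (Next I (Or phi psi)) (Or (Next I phi) (Next I psi)) /\
  mht_equiv (Next I (And phi psi)) (And (Next I phi) (Next I psi)) /\
  mht_equiv (WNext I (Or phi psi)) (Or (WNext I phi) (WNext I psi)) /\
  mht_equiv (WNext I (And phi psi)) (And (WNext I phi) (WNext I psi)) /\
  mht_equiv (Eventually I (Or phi psi)) (Or (Eventually I phi) (Eventually I psi)) /\
  mht_equiv (Always I (And phi psi)) (And (Always I phi) (Always I psi)) /\
  mht_equiv (WPrev I (Or phi psi)) (Or (WPrev I phi) (WPrev I psi)) /\
  mht_equiv (WPrev I (And phi psi)) (And (WPrev I phi) (WPrev I psi)) /\
  mht_equiv (Since I Top (Or phi psi)) (Or (Since I Top phi) (Since I Top psi)) /\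
  mht_equiv (Trigger I (Or phi chi) psi) (Or (Trigger I phi psi) (Trigger I chi psi)) /\
  mht_equiv (Until I phi (Or chi psi)) (Or (Until I phi chi) (Until I phi psi)) /\
  mht_equiv (Until I (And phi chi) psi) (And (Until I phi psi) (Until I chi psi)) /\
  mht_equiv (Release I phi (And chi psi)) (And (Release I phi chi) (Release I phi psi)) /\
  mht_equiv (Release I (Or phi chi) psi) (Or (Release I phi psi) (Release I chi psi)) /\
  mht_equiv (Since I (And phi chi) psi) (And (Since I phi psi) (Since I chi psi)) /\
  mht_equiv (Since I phi (Or chi psi)) (Or (Since I phi chi) (Since I phi psi)) /\
  mht_equiv (Prev I (Or phi psi)) (Or (Prev I phi) (Prev I psi)) /\
  mht_equiv (Prev I (And phi psi)) (And (Prev I phi) (Prev I psi)) /\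
  mht_equiv (AlwaysBefore I (And phi psi)) (And (AlwaysBefore I phi) (AlwaysBefore I psi)) /\
  mht_equiv (Trigger I phi (And chi psi)) (And (Trigger I phi chi) (Trigger I phi psi)).
Proof.
  exact (conj (L0 A I phi psi chi) (conj (L1 A I phi psi chi) (conj (L2 A I phi psi chi) (conj (L3 A I phi psi chi) (conj (L4 A I phi psi chi) (conj (L5 A I phi psi chi) (conj (L6 A I phi psi chi) (conj (L7 A I phi psi chi) (conj (L8 A I phi psi chi) (conj (L9 A I phi psi chi) (conj (L10 A I phi psi chi) (conj (L11 A I phi psi chi) (conj (L12 A I phi psi chi) (conj (L13 A I phi psi chi) (conj (L14 A I phi psi chi) (conj (L15 A I phi psi chi) (conj (L16 A I phi psi chi) (conj (L17 A I phi psi chi) (conj (L18 A I phi psi chi) (L19 A I phi psi chi)))))))))))))))))))).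
Qed.
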